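(* Let $f:[0,1]\to\mathbb{R}$ be continuous on $[0,1]$ and twice differentiable on $(0,1)$, and define $g(t)=f(\tfrac12+t)$ for $t\in[-\tfrac12,\tfrac12]$. Assume: (1) $g^{(2)}(t)>0$ for $-\tfrac12<t<0$, and $g^{(2)}(0)\ge 0$; (2) $g^{(2)}(t)\ge -g^{(2)}(-t)$ for $0<t<\tfrac12$; (3) $\lim_{t\to-1/2}\frac{1}{g^{(2)}(t)}=0$; (4) the function $t\mapsto \frac{1}{g^{(2)}(t)}$ is convex on $[-\tfrac12,0)$ (its value at $-\tfrac12$ being the limit $0$ from (3)). Then $f$ is simplex-convex.
   Context: A function $f:[0,1]\to\mathbb{R}$ is called simplex-convex if for every $n\ge 1$ the function $(p_1,\dots,p_n)\mapsto f(p_1)+\dots+f(p_n)$ is convex on the simplex $\mathrm{Sim}_n(1)=\{(p_1,\dots,p_n): p_i\ge 0,\ \sum_i p_i=1\}$. *)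

(* Defs.v *)
From HB Require Import structures.
From mathcomp Require Import all_boot all_order all_algebra.
From mathcomp Require Import all_classical all_reals all_analysis.
Set Implicit Arguments. Unset Strict Implicit. Unset Printing Implicit Defensive.
Import Order.TTheory GRing.Theory Num.Theory.
Import numFieldNormedType.Exports.
Local Open Scope classical_set_scope.
Local Open Scope ring_scope.

Definition convex_on (R : realType) (I : set R) (h : R -> R) : Prop :=
  forall x y (l : R), I x -> I y -> 0 <= l <= 1 ->
    h (l * x + (1 - l) * y) <= l * h x + (1 - l) * h y.

Definition simplex (R : realType) (n : nat) (p : 'I_n -> R) : Prop :=
  (forall i, 0 <= p i) /\ \sum_(i < n) p i = 1.

Definition simplex_convex (R : realType) (f : R -> R) : Prop :=
  forall n : nat, (0 < n)%N ->
  forall (p q : 'I_n -> R) (l : R), simplex p -> simplex q -> 0 <= l <= 1 ->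
    \sum_(i < n) f (l * p i + (1 - l) * q i)
      <= l * (\sum_(i < n) f (p i)) + (1 - l) * (\sum_(i < n) f (q i)).

(* Main.v *)
Require Import Defs.
From HB Require Import structures.
From mathcomp Require Import all_boot all_order all_algebra.
From mathcomp Require Import ring lra.
From mathcomp Require Import all_classical all_reals all_analysis.
Import Order.TTheory GRing.Theory Num.Theory.
Import numFieldNormedType.Exports.
Local Open Scope classical_set_scope.
Local Open Scope ring_scope.
Lemma pt_ineq (R : realType) (w a mu : R) : 0 < w -> 2 * a * mu - mu ^+ 2 / w <= w * a ^+ 2.
Proof.
move=> w0.
have : 0 <= (w * a - mu) ^+ 2 / w by apply: divr_ge0; [exact: sqr_ge0 | exact: ltW].
have -> : (w * a - mu) ^+ 2 / w = w * a ^+ 2 - (2 * a * mu - mu ^+ 2 / w).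
  by field; rewrite gt_eqF.
by rewrite subr_ge0.
Qed.

Lemma alg_ineq {R : realType} {n : nat} (x v : 'I_n -> R) (c : R -> R) :
  \sum_(i < n) x i = 1 -> (forall i, 0 <= x i) -> \sum_(i < n) v i = 0 ->
  (forall i, v i != 0 -> 0 < x i < 1) ->
  (forall y, 0 < y < 2^-1 -> 0 < c y) -> 0 <= c 2^-1 ->
  (forall y, 2^-1 < y < 1 -> - c (1 - y) <= c y) ->
  (forall y B, 0 < y <= B -> B < 2^-1 -> (c y)^-1 <= (y / B) * (c B)^-1) ->
  0 <= \sum_(i < n) c (x i) * v i * v i.
Proof.
move=> sx x0 sv vx H1 H0 H2 H4.
have sq i : c (x i) * v i * v i = c (x i) * v i ^+ 2 by rewrite -mulrA expr2.
have [[k [vk xk]]|none] := pselect (exists k, v k != 0 /\ 2^-1 < x k); last first.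
  apply: sumr_ge0 => i _; rewrite sq.
  have [->|vi] := eqVneq (v i) 0; first by rewrite expr0n mulr0.
  apply: mulr_ge0; last exact: sqr_ge0.
  have xi : x i <= 2^-1.
    rewrite leNgt; apply/negP => h; apply: none; by exists i.
  move: xi; rewrite le_eqVlt => /predU1P[->//|xi].
  by apply/ltW/H1; rewrite xi andbT; case/andP: (vx i vi).
pose P := fun j : 'I_n => (j != k) && (v j != 0).
set B := 1 - x k.
have [xk0 xk1] := andP (vx k vk).
have B0 : 0 < B by rewrite /B subr_gt0.
have B2 : B < 2^-1.
  rewrite /B; move: xk; lra.
have sx2 : \sum_(j < n | P j) x j <= B.
  rewrite /B -sx [X in _ <= X - _](bigD1 k) //= addrAC subrr add0r.
  rewrite [X in _ <= X](bigID (fun j => v j != 0)) /= -[X in X <= _]addr0; apply: lerD; first exact: lexx.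
  by apply: sumr_ge0 => i _.
have xP j : P j -> 0 < x j <= B.
  move=> Pj; move: (Pj) => /andP[jk vj]; have [xj0 _] := andP (vx j vj).
  rewrite xj0 /=; apply: le_trans sx2.
  rewrite (bigD1 j) //= lerDl; by apply: sumr_ge0 => i _.
have cP j : P j -> 0 < c (x j).
  move=> Pj; apply: H1; have /andP[-> /le_lt_trans] := xP j Pj.
  by move=> /(_ _ B2) ->.
have sv2 : \sum_(j < n | P j) v j = - v k.
  apply/eqP; rewrite -subr_eq0 opprK addrC.
  move: sv; rewrite (bigD1 k) //= (bigID (fun j => v j != 0)) /=.
  rewrite [X in _ + (_ + X)]big1 ?addr0; first by move=> ->.
  by move=> i /andP[_]; rewrite negbK => /eqP.
have sW : \sum_(j < n | P j) (c (x j))^-1 <= (c B)^-1.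
  apply: le_trans (_ : \sum_(j < n | P j) (x j / B) * (c B)^-1 <= _).
    apply: ler_sum => j Pj; apply: H4 => //; exact: xP.
  rewrite -mulr_suml -mulr_suml.
  rewrite -[X in _ <= X]mul1r ler_wpM2r //.
    by rewrite invr_ge0 ltW // H1 // B0 B2.
  by rewrite ler_pdivrMr // mul1r.
have cB : 0 < c B by rewrite H1 // B0 B2.
rewrite (bigD1 k) //= (bigID (fun j => v j != 0)) /=.
rewrite [X in _ + (_ + X)]big1 ?addr0; last first.
  by move=> i /andP[_]; rewrite negbK => /eqP ->; rewrite !mulr0.
have [ck|ck] := leP 0 (c (x k)).
  apply: addr_ge0; first by rewrite sq mulr_ge0 // sqr_ge0.
  apply: sumr_ge0 => j Pj; rewrite sq mulr_ge0 ?sqr_ge0 //; exact/ltW/cP.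
set lam := - c (x k).
have lam0 : 0 < lam by rewrite /lam oppr_gt0.
have lamB : lam <= c B.
  by rewrite /lam lerNl /B; apply: H2; rewrite xk xk1.
set W := \sum_(j < n | P j) (c (x j))^-1.
have W0 : 0 <= W by apply: sumr_ge0 => j Pj; rewrite invr_ge0 ltW // cP.
have lW : lam * W <= 1.
  apply: le_trans (_ : c B * (c B)^-1 <= 1); last by rewrite mulfV ?gt_eqF.
  apply: ler_pM => //; exact: ltW.
set A := - v k.
set mu := lam * A.
have key : \sum_(j < n | P j) (2 * v j * mu - mu ^+ 2 / c (x j))
   <= \sum_(j < n | P j) c (x j) * v j * v j.
  apply: ler_sum => j Pj; rewrite sq; apply: pt_ineq; exact: cP.
have e1 : \sum_(j < n | P j) (2 * v j * mu - mu ^+ 2 / c (x j))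
   = 2 * A * mu - mu ^+ 2 * W.
  rewrite sumrB -mulr_suml -mulr_sumr -mulr_sumr sv2 /W.
  by rewrite -/A.
rewrite e1 in key.
have : lam * A ^+ 2 <= 2 * A * mu - mu ^+ 2 * W.
  rewrite /mu.
  have -> : 2 * A * (lam * A) - (lam * A) ^+ 2 * W = lam * A ^+ 2 + lam * A ^+2 * (1 - lam * W).
    by ring.
  rewrite lerDl; apply: mulr_ge0; first by rewrite mulr_ge0 ?sqr_ge0 ?ltW.
  by rewrite subr_ge0.
move=> h; have := le_trans h key.
rewrite sq /lam /A sqrrN.
move=> h2; rewrite mulNr in h2; move: h2; rewrite lerNl -subr_ge0 opprK addrC; exact.
Qed.
Lemma wcomp (R: realType) (g a : R -> R) : {within `[0,1], continuous g} -> continuous a ->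
  (forall z, z \in `[0,1] -> a z \in `[0,1]) -> {within `[0,1], continuous (g \o a)}.
Proof.
move=> cg ca Aa; apply/subspace_continuousP => x Ax.
have /subspace_continuousP cg' := cg.
apply: cvg_comp (cg' (a x) _); last first.
  by apply: Aa; rewrite inE.
move=> P /= HP.
have := ca x _ HP.
rewrite /within /=.
move=> H.
have {}H : \forall z \near x, a z \in `[0, 1] -> P (a z) := H.
change (\forall z \near x, `[0,1]%classic z -> P (a z)).
near=> z => Az.
have Hz : a z \in `[0, 1] -> P (a z) by exact: (near H z).
apply: Hz; by have := Aa z; rewrite !inE; apply.
Unshelve. all: by end_near.
Qed.


Lemma is_derive_aff (R : realType) (p v s : R) : is_derive s 1 (fun s => p + s * v) v.
Proof.
apply: is_derive_eq.
by rewrite add0r mul1r scaler0 add0r [_%:A]mulr1.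
Qed.

Lemma dterm (R : realType) (F : R -> R) (p v s : R) : (v = 0 \/ derivable F (p + s * v) 1) ->
  is_derive s 1 (fun s => F (p + s * v)) ('D_1 F (p + s * v) * v).
Proof.
case=> [->|dF].
  rewrite mulr0.
  have -> : (fun s0 => F (p + s0 * 0)) = cst (F p) by apply/funext => ?; rewrite mulr0 addr0.
  exact: is_derive_cst.
have H := @is_derive1_comp R F (fun s => p + s * v) s _ _ (derivableP dF) (is_derive_aff R p v s); exact H.
Qed.

Lemma dterm2 (R : realType) (F : R -> R) (p v s c : R) : (v = 0 \/ derivable F (p + s * v) 1) ->
  is_derive s 1 (fun s => F (p + s * v) * c) ('D_1 F (p + s * v) * v * c).
Proof.
move=> /dterm H.
apply: is_derive_eq.
by rewrite scaler0 add0r; exact: mulrC.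
Qed.

Lemma coord_in (R : realType) (p q s : R) : 0 <= p <= 1 -> 0 <= q <= 1 -> 0 < s < 1 ->
  q - p != 0 -> 0 < p + s * (q - p) < 1.
Proof.
move=> /andP[p0 p1] /andP[q0 q1] /andP[s0 s1]; rewrite subr_eq0.
case: (ltgtP p q) => // h _; apply/andP; split; nra.
Qed.

Lemma shift_derive1 (R : realType) (F : R -> R) (c : R) :
  derive1 (fun t => F (c + t)) = fun t => derive1 F (c + t).
Proof.
rewrite funeqE => t; rewrite /derive1.
suff -> : (fun h : R => h^-1 *: (F (c + (h + t)) - F (c + t))) =
  (fun h => h^-1 *: (F (h + (c + t)) - F (c + t))) by [].
by rewrite funeqE => h; rewrite addrCA.
Qed.

Lemma le_sum1 (R : realType) (n : nat) (p : 'I_n -> R) (j : 'I_n) :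
  (forall i, 0 <= p i) -> p j <= \sum_(i < n) p i.
Proof. by move=> p0; rewrite (bigD1 j) //= lerDl; apply: sumr_ge0. Qed.

Theorem theorem5p5 (R : realType) (f : R -> R) :
  {within `[0, 1], continuous f} ->
  (forall x : R, 0 < x < 1 -> derivable f x 1 /\ derivable (derive1 f) x 1) ->
  let g := fun t : R => f (2^-1 + t) in
  (* (1) *)
  (forall t : R, - 2^-1 < t < 0 -> 0 < (derive1n 2 g) t) ->
  0 <= (derive1n 2 g) 0 ->
  (* (2) *)
  (forall t : R, 0 < t < 2^-1 -> - (derive1n 2 g) (- t) <= (derive1n 2 g) t) ->
  (* (3) *)
  (fun t => ((derive1n 2 g) t)^-1) @ at_right (- 2^-1) --> (0 : R) ->
  (* (4) *)
  convex_on [set t : R | - 2^-1 <= t < 0]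
    (fun t => if t == - 2^-1 then 0 else ((derive1n 2 g) t)^-1) ->
  simplex_convex f.
Proof.
move=> fc fd g H1 H0 H2 _ H4 n n0 p q l [p0 sp] [q0 sq] /andP[l0 l1].
pose D1 := 'D_1 f.
pose D2 := 'D_1 D1.
have eD1 : derive1 f = D1 by rewrite funeqE => x; rewrite derive1E.
have eG : forall t, derive1n 2 g t = D2 (2^-1 + t).
  move=> t; rewrite /derive1n /= /g shift_derive1 shift_derive1 eD1.
  by rewrite derive1E.
pose c := fun x => D2 x.
have cE : forall x, derive1n 2 g (x - 2^-1) = c x.
  by move=> x; rewrite eG /c addrC subrK.
have G1 : forall y, 0 < y < 2^-1 -> 0 < c y.
  move=> y /andP[y0 y1]; rewrite -cE; apply: H1; apply/andP; split; lra.
have G0 : 0 <= c 2^-1 by rewrite -cE subrr.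
have G2 : forall y, 2^-1 < y < 1 -> - c (1 - y) <= c y.
  move=> y /andP[y0 y1]; rewrite -!cE.
  have -> : 1 - y - 2^-1 = - (y - 2^-1) by lra.
  apply: H2; apply/andP; split; lra.
have G4 : forall y B, 0 < y <= B -> B < 2^-1 -> (c y)^-1 <= (y / B) * (c B)^-1.
  move=> y B /andP[y0 yB] B2.
  have B0 : 0 < B by apply: lt_le_trans yB.
  have := H4 (B - 2^-1) (- 2^-1) (y / B).
  rewrite eqxx.
  have -> : y / B * (B - 2^-1) + (1 - y / B) * - 2^-1 = y - 2^-1.
    by field; rewrite gt_eqF.
  have -> : (y - 2^-1 == - 2^-1) = false by apply/negbTE; rewrite -subr_eq0 opprK subrK gt_eqF.
  have -> : (B - 2^-1 == - 2^-1) = false by apply/negbTE; rewrite -subr_eq0 opprK subrK gt_eqF.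
  have cE' : forall x, derive1 (derive1 g) (x - 2^-1) = c x := cE.
  rewrite !cE mulr0 addr0 => h; apply: h.
  - rewrite /=; apply/andP; split; lra.
  - rewrite /=; apply/andP; split; lra.
  - apply/andP; split; first by rewrite divr_ge0 // ltW.
    by rewrite ler_pdivrMr // mul1r.
have pb : forall i, 0 <= p i <= 1 by move=> i; rewrite p0 /= -sp; apply: le_sum1.
have qb : forall i, 0 <= q i <= 1 by move=> i; rewrite q0 /= -sq; apply: le_sum1.
pose v := fun i => q i - p i.
pose phi := fun s : R => \sum_(i < n) f (p i + s * v i).
pose psi := fun s : R => \sum_(i < n) D1 (p i + s * v i) * v i.
pose S2 := fun s : R => \sum_(i < n) D2 (p i + s * v i) * v i * v i.
have cin : forall s : R, 0 < s < 1 -> forall i, v i = 0 \/ 0 < p i + s * v i < 1.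
  move=> s hs i; have [e|ne] := eqVneq (v i) 0; first by left.
  by right; apply: coord_in.
have Dphi : forall s : R, 0 < s < 1 -> is_derive s 1 phi (psi s).
  move=> s hs; rewrite /phi /psi.
  have -> : (fun s => \sum_(i < n) f (p i + s * v i)) =
     \sum_(i < n) (fun s => f (p i + s * v i)) by rewrite fct_sumE.
  apply: is_derive_sum => i; apply: dterm.
  by case: (cin s hs i) => [->|h]; [left|right; exact: (fd _ h).1].
have Dpsi : forall s : R, 0 < s < 1 -> is_derive s 1 psi (S2 s).
  move=> s hs; rewrite /psi /S2.
  have -> : (fun s => \sum_(i < n) D1 (p i + s * v i) * v i) =
     \sum_(i < n) (fun s => D1 (p i + s * v i) * v i) by rewrite fct_sumE.
  apply: is_derive_sum => i; apply: dterm2.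
  case: (cin s hs i) => [->|h]; [by left|right].
  by have := (fd _ h).2; rewrite eD1.
have nE : forall s : R, 0 < s < 1 -> {near s, psi =1 'D_1 phi}.
  move=> s hs.
  have : s \in `]0, 1[ by rewrite in_itv.
  move/near_in_itvoo; apply: filterS => s' /=; rewrite in_itv /= => hs'.
  by case: (Dphi s' hs') => _ ->.
have phic : {within `[0, 1], continuous phi}.
  have -> : phi = \sum_(i < n) (fun s => f (p i + s * v i)) by rewrite fct_sumE.
  apply: (big_ind (fun F : R -> R => {within `[0, 1], continuous F})).
  - by move=> x; exact: cvg_cst.
  - by move=> F G; apply: within_continuousD.
  move=> i _.
  have -> : (fun s => f (p i + s * v i)) = f \o (fun s => p i + s * v i) by [].
  apply: wcomp => //.
    move=> x; apply/differentiable_continuous/derivable1_diffP.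
    by case: (is_derive_aff R (p i) (v i) x).
  move=> z; rewrite !in_itv /= => /andP[z0 z1].
  have := pb i; have := qb i; rewrite /v => /andP[? ?] /andP[? ?].
  apply/andP; split; nra.
have [_ cr cl] := (continuous_within_itvP phi ltr01).1 phic.
have HDf : {in `]0, 1[, forall x, derivable phi x 1}.
  by move=> x; rewrite in_itv => hx; case: (Dphi x hx).
have HDDf : {in `]0, 1[, forall x, derivable ('D_1 phi) x 1}.
  move=> x; rewrite in_itv => hx; apply: (near_eq_derivable (nE x hx)).
  by case: (Dpsi x hx).
have sv : \sum_(i < n) v i = 0 by rewrite /v sumrB sp sq subrr.
have DD : forall x : R, 0 < x < 1 -> 0 <= 'D_1 ('D_1 phi) x.
  move=> x hx; rewrite -(near_eq_derive _ (nE x hx)).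
  case: (Dpsi x hx) => _ ->; rewrite /S2.
  apply: (alg_ineq (fun i => p i + x * v i) v c) => //.
  - by rewrite big_split /= -mulr_sumr sv mulr0 addr0.
  - move=> i; have := pb i; have := qb i; move: hx; rewrite /v => /andP[? ?] /andP[? ?] /andP[? ?].
    nra.
  - by move=> i vi; apply: coord_in.
have := @second_derivative_convex R phi 0 1 DD cl cr HDf HDDf (Itv01 l0 l1) ler01.
rewrite !convRE /= /unstable.onem mulr0 add0r mulr1.
have -> : phi 0 = \sum_(i < n) f (p i).
  by apply: eq_bigr => i _; rewrite mul0r addr0.
have -> : phi 1 = \sum_(i < n) f (q i).
  by apply: eq_bigr => i _; rewrite mul1r /v addrC subrK.
have -> : phi (1 - l) = \sum_(i < n) f (l * p i + (1 - l) * q i).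
  by apply: eq_bigr => i _; congr f; rewrite /v; ring.
by [].
Qed.
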